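(* Assume (A1)–(A5) hold and let $\{u_k\}_{k\ge0}$ be the exact-data iteration defined below. Then $\{u_k\}_{k\ge0}$ converges to a solution $u^\dagger$ of $\mathcal F(u)=v$.
   Context: Spaces and operator. Let $\mathcal U=\mathbb R^N$ and $\mathcal V=\mathbb R^M$ carry the Euclidean inner product and norm. Let $\mathcal F:\mathcal D(\mathcal F)\subset\mathcal U\to\mathcal V$ be a (possibly nonlinear) operator, let $v\in\mathcal V$ be exact data, and let $\mathcal B_r(x)$ denote the closed ball of radius $r$ centred at $x$. Images and graph Laplacian. Elements of $\mathcal U$ are images on a pixel grid $\mathcal S=\{1,\dots,p\}\times\{1,\dots,q\}$ with $N=pq$. Fix $R\in(0,\infty)$, $\lambda>0$ and a metric $d$ on $\mathcal S$. For $u\in\mathcal U$, define $$(W_u)_{ab}=\mathbf 1_{(0,R]}(d(a,b))\exp(-|u(a)-u(b)|^2/\lambda),$$ let $D_u$ be the diagonal matrix of row sums of $W_u$, and set $\Delta_u=D_u-W_u$. Exact-data iteration. Let $\Psi:\mathcal V\to\mathcal U$ be a reconstruction map and set $u_0=\Psi(v)$. Define $$u_{k+1}=u_k-\alpha_k\mathcal F'(u_k)^*(\mathcal F(u_k)-v)-\beta_k\Delta_{u_k}u_k,$$ with $$\alpha_k=\min\Big\{\frac{\zeta_0\|\mathcal F(u_k)-v\|}{\|\mathcal F'(u_k)^*(\mathcal F(u_k)-v)\|},\zeta_1\Big\}.$$ If $\|\Delta_{u_k}u_k\|\ne0$, then $$\beta_k=\min\Big\{\frac{\nu_0\|\mathcal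 F(u_k)-v\|^2}{\|\Delta_{u_k}u_k\|},\frac{\nu_1}{\|\Delta_{u_k}u_k\|},\nu_2\Big\},$$ and otherwise $\beta_k=0$. Here $\zeta_0,\zeta_1,\nu_0,\nu_1,\nu_2>0$ are constants, and $\zeta>0$ is a constant with $\zeta\le\alpha_k$ for all $k$. Operator assumptions. There exist $\wp>0$, $B>0$, $\eta\in[0,1)$ and $L\ge0$ such that for all $u,w\in\mathcal B_{3\wp}(u_0)\subset\mathcal D(\mathcal F)$: - (A1) $\mathcal F$ is Fréchet differentiable with $u\mapsto\mathcal F'(u)$ continuous; - (A2) $\|\mathcal F'(u)\|\le B$; - (A3) $\|\mathcal F(u)-\mathcal F(w)-\mathcal F'(w)(u-w)\|\le\eta\|\mathcal F(u)-\mathcal F(w)\|$; - (A4) $\|\mathcal F'(u)-\mathcal F'(w)\|\le L\|u-w\|$; - (A5) there exists $u^\dagger\in\mathcal B_\wp(u_0)$ with $\mathcal F(u^\dagger)=v$. Standing parameter condition. Fix $\mathcal H>\frac{1+\eta}{1-\eta}$, and assume $$\zeta>\frac{\nu_0(\wp+\nu_1)+\zeta_0^2}{1-\eta-\frac{1+\eta}{\mathcal H}} .$$ *)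

(* Defs.v *)
From HB Require Import structures.
From mathcomp Require Import all_boot all_order all_algebra.
From mathcomp Require Import all_classical all_reals all_analysis.
Set Implicit Arguments. Unset Strict Implicit. Unset Printing Implicit Defensive.
Import Order.TTheory GRing.Theory Num.Theory.
Local Open Scope ring_scope.

Section Defs.
Variable R : realType.

Definition enorm n (x : 'cV[R]_n) : R := Num.sqrt (\sum_i (x i 0) ^+ 2).

Definition cball n (c : 'cV[R]_n) (r : R) (x : 'cV[R]_n) : Prop :=
  enorm (x - c) <= r.

Definition opnorm_le m n (A : 'M[R]_(m, n)) (c : R) : Prop :=
  forall h : 'cV[R]_n, enorm (A *m h) <= c * enorm h.

(* F is Frechet differentiable at u (relative to its domain D) with
   derivative the matrix Fd u, i.e. F'(u) h = Fd u *m h *)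
Definition frechet_at m n (D : 'cV[R]_n -> Prop) (F : 'cV[R]_n -> 'cV[R]_m)
  (Fd : 'cV[R]_n -> 'M[R]_(m, n)) (u : 'cV[R]_n) : Prop :=
  forall eps : R, 0 < eps -> exists delta : R, 0 < delta /\
    forall w, D w -> enorm (w - u) < delta ->
      enorm (F w - F u - Fd u *m (w - u)) <= eps * enorm (w - u).

Definition deriv_cont_at m n (S : 'cV[R]_n -> Prop)
  (Fd : 'cV[R]_n -> 'M[R]_(m, n)) (u : 'cV[R]_n) : Prop :=
  forall eps : R, 0 < eps -> exists delta : R, 0 < delta /\
    forall w, S w -> enorm (w - u) < delta -> opnorm_le (Fd w - Fd u) eps.

Definition converges_to n (u : nat -> 'cV[R]_n) (x : 'cV[R]_n) : Prop :=
  forall eps : R, 0 < eps -> exists K : nat, forall k, (K <= k)%N ->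
    enorm (u k - x) < eps.

Definition is_metric (T : eqType) (d : T -> T -> R) : Prop :=
  (forall a b, 0 <= d a b) /\ (forall a b, d a b = 0 <-> a = b) /\
  (forall a b, d a b = d b a) /\ (forall a b c, d a c <= d a b + d b c).

(* Images: U = R^(p*q), pixel a = (i,j) in S = 'I_p * 'I_q; a vector u
   is identified with an image through MathComp's mxvec indexing. *)
Definition pix p q (u : 'cV[R]_(p * q)) (a : 'I_p * 'I_q) : R :=
  u (mxvec_index a.1 a.2) 0.

Definition Wgt p q (Rad lam : R) (d : 'I_p * 'I_q -> 'I_p * 'I_q -> R)
  (u : 'cV[R]_(p * q)) (a b : 'I_p * 'I_q) : R :=
  if (0 < d a b) && (d a b <= Rad)
  then expR (- ((pix u a - pix u b) ^+ 2) / lam) else 0.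

Definition Deg p q Rad lam d (u : 'cV[R]_(p * q)) (a b : 'I_p * 'I_q) : R :=
  if a == b then \sum_c Wgt Rad lam d u a c else 0.

Definition Lap p q Rad lam d (u : 'cV[R]_(p * q)) (a b : 'I_p * 'I_q) : R :=
  Deg Rad lam d u a b - Wgt Rad lam d u a b.

Definition Lap_apply p q Rad lam d (w x : 'cV[R]_(p * q)) : 'cV[R]_(p * q) :=
  (mxvec (\matrix_(i < p, j < q)
     \sum_b Lap Rad lam d w (i, j) b * pix x b))^T.

End Defs.

(* Main.v *)
Require Import Defs.
From HB Require Import structures.
From mathcomp Require Import all_boot all_order all_algebra.
From mathcomp Require Import all_classical all_reals all_analysis.
Import Order.TTheory GRing.Theory Num.Theory.
Local Open Scope ring_scope.

From mathcomp Require Import lra.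
Set Implicit Arguments. Unset Strict Implicit. Unset Printing Implicit Defensive.

Section Clus.
Import numFieldTopology.Exports.
Local Open Scope classical_set_scope.
Lemma cluster_exists (R : realType) n (w : nat -> 'cV[R]_n) (C : R) :
  (forall k i, `|w k i 0| <= C) ->
  exists x : 'cV[R]_n, forall e, 0 < e -> forall K, exists k, (K <= k)%N /\
     forall i, `|w k i 0 - x i 0| < e.
Proof.
move=> wC.
have cA := @rV_compact R n (fun _ => `[-C, C]%classic) (fun _ => @segment_compact R (-C) C).
have [|y [_ cly]] := cA ((fun k => (w k)^T) @ \oo) _.
  by exists 0%N => // k _ i; rewrite /= mxE in_itv /= -ler_norml wC.
exists y^T => e e0 K.
  have := cly [set v | exists k, (K <= k)%N /\ v = (w k)^T] (ball y e).
  case.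
  - by exists K => // k /= Kk; exists k.
  - exact: nbhsx_ballx.
  move=> v [[k [Kk ->]] byv]; exists k; split => // i.
  move: byv; rewrite -ball_normE /= => H.
  apply: le_lt_trans H.
  rewrite !mxE -normrN opprB.
  have -> : w k i 0 - y 0 i = ((w k)^T - y) 0 i by rewrite !mxE.
  by rewrite [leRHS]/Num.norm /= mx_normrE; apply/bigmax_geP; right => /=; exists (0, i).
Qed.

End Clus.

Section Eucl.
Variable R : realType.

Definition dot n (x y : 'cV[R]_n) : R := \sum_i x i 0 * y i 0.

Lemma dotC n (x y : 'cV[R]_n) : dot x y = dot y x.
Proof. by apply: eq_bigr => i _; rewrite mulrC. Qed.

Lemma dotDl n (x y z : 'cV[R]_n) : dot (x + y) z = dot x z + dot y z.
Proof. by rewrite /dot -big_split; apply: eq_bigr => i _; rewrite mxE mulrDl. Qed.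

Lemma dotNl n (x z : 'cV[R]_n) : dot (- x) z = - dot x z.
Proof. by rewrite /dot -sumrN; apply: eq_bigr => i _; rewrite mxE mulNr. Qed.

Lemma dotZl n a (x z : 'cV[R]_n) : dot (a *: x) z = a * dot x z.
Proof. by rewrite /dot mulr_sumr; apply: eq_bigr => i _; rewrite mxE mulrA. Qed.

Lemma dotBl n (x y z : 'cV[R]_n) : dot (x - y) z = dot x z - dot y z.
Proof. by rewrite dotDl dotNl. Qed.

Lemma dotDr n (x y z : 'cV[R]_n) : dot z (x + y) = dot z x + dot z y.
Proof. by rewrite dotC dotDl !(dotC z). Qed.
Lemma dotNr n (x z : 'cV[R]_n) : dot z (- x) = - dot z x.
Proof. by rewrite dotC dotNl dotC. Qed.
Lemma dotBr n (x y z : 'cV[R]_n) : dot z (x - y) = dot z x - dot z y.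
Proof. by rewrite dotDr dotNr. Qed.
Lemma dotZr n a (x z : 'cV[R]_n) : dot z (a *: x) = a * dot z x.
Proof. by rewrite dotC dotZl dotC. Qed.

Lemma dot_ge0 n (x : 'cV[R]_n) : 0 <= dot x x.
Proof. by apply: sumr_ge0 => i _; rewrite -expr2 sqr_ge0. Qed.

Lemma enormE n (x : 'cV[R]_n) : enorm x = Num.sqrt (dot x x).
Proof. by rewrite /enorm /dot; congr Num.sqrt; apply: eq_bigr => i _; rewrite expr2. Qed.

Lemma enorm_ge0 n (x : 'cV[R]_n) : 0 <= enorm x.
Proof. exact: sqrtr_ge0. Qed.

Lemma enorm_sq n (x : 'cV[R]_n) : enorm x ^+ 2 = dot x x.
Proof. by rewrite enormE sqr_sqrtr // dot_ge0. Qed.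

Lemma dot0_eq0 n (x : 'cV[R]_n) : dot x x = 0 -> x = 0.
Proof.
move=> h; apply/matrixP => i j; rewrite (ord1 j) mxE.
have H := @psumr_eq0P _ _ predT (fun i => x i 0 * x i 0).
have := H (fun i _ => ltac:(by rewrite -expr2 sqr_ge0)) h i isT.
by move=> /eqP; rewrite mulf_eq0 orbb => /eqP.
Qed.

Lemma enorm_eq0 n (x : 'cV[R]_n) : enorm x = 0 -> x = 0.
Proof.
move=> h; apply: dot0_eq0; by rewrite -enorm_sq h expr0n.
Qed.

Lemma dot0l n (x : 'cV[R]_n) : dot 0 x = 0.
Proof. by rewrite /dot big1 // => i _; rewrite mxE mul0r. Qed.

Lemma sq_le (a b : R) : 0 <= b -> a ^+ 2 <= b ^+ 2 -> a <= b.
Proof.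
move=> b0 h; apply: (le_trans (ler_norm a)).
by rewrite -sqrtr_sqr -(ger0_norm b0) -sqrtr_sqr ler_sqrt // sqr_ge0.
Qed.

Lemma CS n (x y : 'cV[R]_n) : dot x y <= enorm x * enorm y.
Proof.
set a := enorm x; set b := enorm y.
have a0 : 0 <= a by exact: enorm_ge0.
have b0 : 0 <= b by exact: enorm_ge0.
have := dot_ge0 (b *: x - a *: y).
rewrite !(dotBl, dotBr, dotZl, dotZr) -!enorm_sq (dotC y x) -/a -/b => h.
have [ab0|] := eqVneq (a * b) 0.
  move/eqP: (ab0); rewrite mulf_eq0 => /orP[] /eqP /enorm_eq0 ->.
    by rewrite dot0l ab0.
  by rewrite dotC dot0l ab0.
move=> abn0.
have abp : 0 < a * b by rewrite lt_def abn0 mulr_ge0.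
have : (a * b) * dot x y <= (a * b) * (a * b) by nra.
by rewrite ler_pM2l.
Qed.

Lemma enormN n (x : 'cV[R]_n) : enorm (- x) = enorm x.
Proof. by rewrite !enormE dotNl dotNr opprK. Qed.

Lemma enormB n (x y : 'cV[R]_n) : enorm (x - y) = enorm (y - x).
Proof. by rewrite -enormN opprB. Qed.

Lemma CSn n (x y : 'cV[R]_n) : - (enorm x * enorm y) <= dot x y.
Proof.
by rewrite lerNl -dotNl; apply: le_trans (CS _ _) _; rewrite enormN.
Qed.

Lemma enormD n (x y : 'cV[R]_n) : enorm (x + y) <= enorm x + enorm y.
Proof.
apply: sq_le; first by rewrite addr_ge0 // enorm_ge0.
rewrite enorm_sq dotDl !dotDr (dotC y x) -!enorm_sq.
have := CS x y; nra.
Qed.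

Lemma enorm_trmx m n (A : 'M[R]_(m, n)) (x : 'cV[R]_n) (y : 'cV[R]_m) :
  dot x (A^T *m y) = dot (A *m x) y.
Proof.
rewrite /dot.
under eq_bigr => i _ do rewrite mxE big_distrr /=.
under [RHS]eq_bigr => i _ do rewrite mxE big_distrl /=.
rewrite exchange_big /=; apply: eq_bigr => i _; apply: eq_bigr => j _.
by rewrite mxE; lra.
Qed.

Lemma step_ineq n m (e g Dl : 'cV[R]_n) (T r : 'cV[R]_m)
  (a b zeta zeta0 nu0 nu1 eta wp : R) :
  dot e g = dot T r -> enorm (T - r) <= eta * enorm r -> 0 <= eta -> eta < 1 ->
  0 <= zeta -> zeta <= a -> a * enorm g <= zeta0 * enorm r -> 0 <= b ->
  b * enorm Dl <= nu0 * enorm r ^+ 2 -> b * enorm Dl <= nu1 -> enorm e <= wp ->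
  enorm (e - a *: g - b *: Dl) ^+ 2 <=
  enorm e ^+ 2 - 2 * (zeta * (1 - eta) - (nu0 * (wp + nu1) + zeta0 ^+ 2)) * enorm r ^+ 2.
Proof.
move=> hT hTr eta0 eta1 z0 za hag b0 hb1 hb2 he.
have a0 : 0 <= a by apply: le_trans za.
have G0 := enorm_ge0 g; have D0 := enorm_ge0 Dl; have E0 := enorm_ge0 e;
have R0 := enorm_ge0 r.
set G := enorm g in G0 hag *; set Dn := enorm Dl in D0 hb1 hb2 *.
set E := enorm e in E0 he *; set Rn := enorm r in R0 hTr hb1 hag *.
have hX : (1 - eta) * Rn ^+ 2 <= dot e g.
  rewrite hT -(subrK r T) dotDl -enorm_sq -/Rn.
  have := CSn (T - r) r; rewrite -/Rn => h.
  have : enorm (T - r) * Rn <= eta * Rn * Rn by rewrite ler_wpM2r.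
  nra.
have haX : zeta * (1 - eta) * Rn ^+ 2 <= a * dot e g.
  have h1 : 0 <= (1 - eta) * Rn ^+ 2 by rewrite mulr_ge0 ?sqr_ge0 // subr_ge0 ltW.
  apply: le_trans (_ : a * ((1 - eta) * Rn ^+ 2) <= _).
    by rewrite -mulrA ler_wpM2r.
  by rewrite ler_wpM2l.
have hY : - (E * Dn) <= dot e Dl by exact: CSn.
have hbY : - (nu0 * Rn ^+ 2 * wp) <= b * dot e Dl.
  have h1 : (b * Dn) * E <= nu0 * Rn ^+ 2 * wp.
    apply: le_trans (_ : (nu0 * Rn ^+ 2) * E <= _); first by rewrite ler_wpM2r.
    have nR : 0 <= nu0 * Rn ^+ 2 by apply: le_trans hb1; exact: mulr_ge0.
    by rewrite ler_wpM2l.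
  have h2 : - (b * (E * Dn)) <= b * dot e Dl by rewrite -mulrN ler_wpM2l.
  nra.
have hZ : dot g Dl <= G * Dn by exact: CS.
have haZ : a * b * dot g Dl <= (a * G) * (b * Dn).
  by rewrite mulrACA ler_wpM2l // mulr_ge0.
have hG2 : (a * G) ^+ 2 <= zeta0 ^+ 2 * Rn ^+ 2.
  by rewrite -exprMn !expr2; apply: ler_pM => //; rewrite mulr_ge0.
have hD2 : (b * Dn) ^+ 2 <= nu0 * Rn ^+ 2 * nu1.
  rewrite expr2; apply: ler_pM => //; rewrite ?mulr_ge0 //.
have hAM : (a * G) * (b * Dn) * 2 <= (a * G) ^+ 2 + (b * Dn) ^+ 2.
  have := sqr_ge0 (a * G - b * Dn); nra.
rewrite enorm_sq !(dotBl, dotBr, dotZl, dotZr) -!enorm_sq -/E -/G -/Dn.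
rewrite (dotC g e) (dotC Dl e) (dotC Dl g).
nra.
Qed.


Lemma vanish (E r : nat -> R) (c : R) : 0 < c -> (forall k, 0 <= E k) ->
  (forall k, 0 <= r k) -> (forall k, c * r k ^+ 2 <= E k - E k.+1) ->
  forall eps, 0 < eps -> exists K, forall k, (K <= k)%N -> r k < eps.
Proof.
move=> c0 E0 r0 hE eps e0.
have mono k : E k.+1 <= E k.
  have := hE k; have := sqr_ge0 (r k); nra.
have hinf : has_inf (range E).
  split; first by exists (E 0%N), 0%N.
  by exists 0 => _ [k _ <-].
have [_ [K _ <-] hK] := inf_adherent (mulr_gt0 c0 (exprn_gt0 2 e0)) hinf.
exists K => k Kk.
have mK j : E (K + j)%N <= E K.
  elim: j => [|j IH]; first by rewrite addn0.
  by rewrite addnS; apply: le_trans (mono _) IH.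
have hk : E k <= E K by rewrite -(subnKC Kk); exact: mK.
have hi : inf (range E) <= E k.+1 by apply: ge_inf => //; case: hinf.
have := hE k; have := r0 k.
move=> rk0 h.
have hh : c * r k ^+ 2 < c * eps ^+ 2 by lra.
rewrite ltr_pM2l // in hh.
rewrite ltNge; apply/negP => ek.
have : eps ^+ 2 <= r k ^+ 2 by rewrite !expr2; apply: ler_pM => //; apply: ltW.
by rewrite leNgt hh.
Qed.

Lemma coord_le n (x : 'cV[R]_n) i : `|x i 0| <= enorm x.
Proof.
apply: sq_le; first exact: enorm_ge0.
rewrite /enorm sqr_sqrtr; last by apply: sumr_ge0 => j _; exact: sqr_ge0.
rewrite real_normK ?num_real // (bigD1 i) //= lerDl.
by apply: sumr_ge0 => j _; exact: sqr_ge0.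
Qed.

Lemma small_coords n (eps : R) : 0 < eps -> exists2 e : R, 0 < e &
  forall x : 'cV[R]_n, (forall i, `|x i 0| < e) -> enorm x < eps.
Proof.
move=> e0.
have N0 : 0 <= (n%:R : R) by exact: ler0n.
have N1 : 0 < (n%:R : R) + 1 by lra.
exists (eps / (n%:R + 1)); first exact: divr_gt0.
move=> x hx.
set e := eps / (n%:R + 1).
have ee : eps = e * (n%:R + 1) by rewrite /e divfK // gt_eqF.
have ep : 0 < e by exact: divr_gt0.
have hs : enorm x ^+ 2 <= n%:R * e ^+ 2.
  rewrite /enorm sqr_sqrtr; last by apply: sumr_ge0 => j _; exact: sqr_ge0.
  apply: le_trans (_ : \sum_(i < n) e ^+ 2 <= _).
    apply: ler_sum => i _.
    rewrite -(real_normK (num_real (x i 0))).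
    have h2 : `|x i 0| < e := hx i; have := normr_ge0 (x i 0); nra.
  by rewrite sumr_const card_ord mulr_natl.
have := enorm_ge0 x; rewrite ee; nra.
Qed.

End Eucl.

Unset Implicit Arguments. Unset Strict Implicit.

Theorem mainTheorem4
  (R : realType) (p q M : nat)
  (D : 'cV[R]_(p * q) -> Prop)
  (F : 'cV[R]_(p * q) -> 'cV[R]_M)
  (Fd : 'cV[R]_(p * q) -> 'M[R]_(M, p * q))
  (v : 'cV[R]_M) (Psi : 'cV[R]_M -> 'cV[R]_(p * q))
  (Rad lam : R) (d : 'I_p * 'I_q -> 'I_p * 'I_q -> R)
  (zeta0 zeta1 nu0 nu1 nu2 zeta wp B eta L H : R)
  (u : nat -> 'cV[R]_(p * q)) (alpha beta : nat -> R) :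
  0 < Rad -> 0 < lam -> is_metric d ->
  0 < zeta0 -> 0 < zeta1 -> 0 < nu0 -> 0 < nu1 -> 0 < nu2 -> 0 < zeta ->
  0 < wp -> 0 < B -> 0 <= eta -> eta < 1 -> 0 <= L ->
  (* B_{3 wp}(u0) is contained in D(F) *)
  (forall x, cball (Psi v) (3 * wp) x -> D x) ->
  (* (A1) *)
  (forall x, cball (Psi v) (3 * wp) x ->
     frechet_at D F Fd x /\ deriv_cont_at (cball (Psi v) (3 * wp)) Fd x) ->
  (* (A2) *)
  (forall x, cball (Psi v) (3 * wp) x -> opnorm_le (Fd x) B) ->
  (* (A3) *)
  (forall x w, cball (Psi v) (3 * wp) x -> cball (Psi v) (3 * wp) w ->
     enorm (F x - F w - Fd w *m (x - w)) <= eta * enorm (F x - F w)) ->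
  (* (A4) *)
  (forall x w, cball (Psi v) (3 * wp) x -> cball (Psi v) (3 * wp) w ->
     opnorm_le (Fd x - Fd w) (L * enorm (x - w))) ->
  (* (A5) *)
  (exists ud, cball (Psi v) wp ud /\ F ud = v) ->
  (* standing parameter condition *)
  (1 + eta) / (1 - eta) < H ->
  (nu0 * (wp + nu1) + zeta0 ^+ 2) / (1 - eta - (1 + eta) / H) < zeta ->
  (* the exact-data iteration *)
  u 0%N = Psi v ->
  (forall k, alpha k = Num.min
     (zeta0 * enorm (F (u k) - v) / enorm ((Fd (u k))^T *m (F (u k) - v)))
     zeta1) ->
  (forall k, beta k =
     if enorm (Lap_apply Rad lam d (u k) (u k)) != 0 then
       Num.min (Num.min
         (nu0 * enorm (F (u k) - v) ^+ 2 / enorm (Lap_apply Rad lam d (u k) (u k)))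
         (nu1 / enorm (Lap_apply Rad lam d (u k) (u k)))) nu2
     else 0) ->
  (forall k, zeta <= alpha k) ->
  (forall k, u k.+1 = u k - alpha k *: ((Fd (u k))^T *m (F (u k) - v))
                        - beta k *: Lap_apply Rad lam d (u k) (u k)) ->
  exists x, D x /\ F x = v /\ converges_to u x.
Proof.
Proof.
move=> Rad0 lam0 dm z0p z1p n0p n1p n2p zp wpp Bp eta0 eta1 L0 Dball A1 A2 A3 A4
  [ud [udb Fud]] HH Hz u0E alphaE betaE za uS.
set c := 2 * (zeta * (1 - eta) - (nu0 * (wp + nu1) + zeta0 ^+ 2)).
have cpos : 0 < c.
  have e1 : 0 < 1 - eta by lra.
  have Hp : 0 < H by apply: le_lt_trans HH; apply: divr_ge0; lra.
  have h1 : (1 + eta) < H * (1 - eta) by rewrite -ltr_pdivrMr.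
  have h2 : (1 + eta) / H < 1 - eta by rewrite ltr_pdivrMr // mulrC.
  have h3 : 0 <= (1 + eta) / H by apply: divr_ge0; lra.
  have den0 : 0 < 1 - eta - (1 + eta) / H by lra.
  move: Hz; rewrite ltr_pdivrMr // => Hz.
  have : zeta * (1 - eta - (1 + eta) / H) <= zeta * (1 - eta).
    by rewrite ler_wpM2l; lra.
  rewrite /c; lra.
have tri n (x y z : 'cV[R]_n) : enorm (x - z) <= enorm (x - y) + enorm (y - z).
  by have := enormD (x - y) (y - z); rewrite addrA subrK.
have Ha k : zeta <= alpha k /\
    alpha k * enorm ((Fd (u k))^T *m (F (u k) - v)) <= zeta0 * enorm (F (u k) - v).
  split; first exact: za.
  have := za k; rewrite alphaE.
  set g := enorm ((Fd (u k))^T *m _); set rr := enorm (F (u k) - v) => hz.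
  have hle : Num.min (zeta0 * rr / g) zeta1 <= zeta0 * rr / g by rewrite ge_min lexx.
  have [g0|gn0] := eqVneq g 0.
    by move: hle hz; rewrite g0 invr0 mulr0 => hle hz; lra.
  have gp : 0 < g by rewrite lt_def gn0 enorm_ge0.
  by rewrite -ler_pdivlMr //; apply: le_trans hle.
have Hb k : 0 <= beta k /\
    beta k * enorm (Lap_apply Rad lam d (u k) (u k)) <= nu0 * enorm (F (u k) - v) ^+ 2 /\
    beta k * enorm (Lap_apply Rad lam d (u k) (u k)) <= nu1.
  rewrite betaE.
  set Dn := enorm (Lap_apply _ _ _ _ _); set rr := enorm (F (u k) - v).
  have rr0 : 0 <= nu0 * rr ^+ 2 by rewrite mulr_ge0 ?sqr_ge0 // ltW.
  have [Dz|Dnz] := eqVneq Dn 0.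
    by rewrite Dz /= mulr0; split => //; split => //; lra.
  have Dp : 0 < Dn by rewrite lt_def Dnz enorm_ge0.
  rewrite /=.
  split.
    rewrite !le_min; apply/andP; split; last by lra.
    by apply/andP; split; apply: divr_ge0 => //; lra.
  split; rewrite -ler_pdivlMr //.
    by rewrite !ge_min lexx.
  by rewrite !ge_min lexx orbT.
have step k z : F z = v -> cball (Psi v) (3 * wp) z -> cball (Psi v) (3 * wp) (u k) ->
    enorm (u k - z) <= wp ->
    enorm (u k.+1 - z) ^+ 2 <= enorm (u k - z) ^+ 2 - c * enorm (F (u k) - v) ^+ 2.
  move=> Fz zb ub hk.
  have [ha1 ha2] := Ha k; have [hb1 [hb2 hb3]] := Hb k.
  rewrite uS.
  have -> : u k - alpha k *: ((Fd (u k))^T *m (F (u k) - v)) -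
      beta k *: Lap_apply Rad lam d (u k) (u k) - z =
      (u k - z) - alpha k *: ((Fd (u k))^T *m (F (u k) - v)) -
      beta k *: Lap_apply Rad lam d (u k) (u k).
    by apply/matrixP => i j; rewrite !mxE; lra.
  apply: (step_ineq (T := Fd (u k) *m (u k - z))) => //; last by lra.
    exact: enorm_trmx.
  have := A3 z (u k) zb ub; rewrite Fz.
  have -> : v - F (u k) - Fd (u k) *m (z - u k) = Fd (u k) *m (u k - z) - (F (u k) - v).
    rewrite -(opprB (u k) z) mulmxN opprK opprB addrC.
    by rewrite addrA.
  by rewrite enormB.
have mono k z : F z = v -> cball (Psi v) (3 * wp) z -> cball (Psi v) (3 * wp) (u k) ->
    enorm (u k - z) <= wp -> enorm (u k.+1 - z) <= enorm (u k - z).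
  move=> Fz zb ub hk; apply: sq_le; first exact: enorm_ge0.
  have := step k z Fz zb ub hk.
  have : 0 <= c * enorm (F (u k) - v) ^+ 2 by rewrite mulr_ge0 ?sqr_ge0 // ltW.
  lra.
have inball x : enorm (x - ud) <= 2 * wp -> cball (Psi v) (3 * wp) x.
  move=> hx; rewrite /cball; apply: le_trans (tri _ _ ud _) _.
  by move: udb; rewrite /cball; lra.
have udb3 : cball (Psi v) (3 * wp) ud by apply: inball; rewrite subrr /enorm big1 ?sqrtr0; [lra| move=> i _; rewrite mxE expr0n].
have P1 k : enorm (u k - ud) <= wp.
  elim: k => [|k IH].
    by rewrite u0E enormB.
  have IH2 := IH; apply: le_trans (mono k ud Fud udb3 _ IH) IH.
  by apply: inball; lra.
have ub k : cball (Psi v) (3 * wp) (u k) by apply: inball; have := P1 k; lra.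
have rvan := vanish cpos (fun k => sqr_ge0 (enorm (u k - ud)))
  (fun k => enorm_ge0 (F (u k) - v))
  (fun k => ltac:(have := step k ud Fud udb3 (ub k) (P1 k); lra)).
have hC k i : `|u k i 0| <= wp + enorm ud.
  apply: le_trans (coord_le (u k) i) _.
  have := enormD (u k - ud) ud; rewrite subrK; have := P1 k; lra.
have [xs Hxs] := cluster_exists hC.
have Hcl eps : 0 < eps -> forall K, exists k, (K <= k)%N /\ enorm (u k - xs) < eps.
  move=> e0 K; have [e ep He] := small_coords (p * q) e0.
  have [k [Kk hk]] := Hxs e ep K.
  by exists k; split => //; apply: He => i; rewrite !mxE; exact: hk.
have xsud : enorm (xs - ud) <= wp.
  apply/ler_addgt0Pr => e e0.
  have [k [_ hk]] := Hcl e e0 0%N.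
  have := tri _ xs (u k) ud; rewrite (enormB xs (u k)); have := P1 k; lra.
have xsb : cball (Psi v) (3 * wp) xs by apply: inball; lra.
have Fxs : F xs = v.
  set Q := enorm (F xs - v).
  have hQ e : 0 < e -> (1 - eta) * Q <= (B + 1) * e.
    move=> e0.
    have [K HK] := rvan e e0.
    have [k [Kk hk]] := Hcl e e0 K.
    have rk := HK k Kk.
    set N := enorm (F xs - F (u k)).
    set Mx := Fd (u k) *m (xs - u k).
    have h3 : enorm (F xs - F (u k) - Mx) <= eta * N := A3 xs (u k) xsb (ub k).
    have hN : N <= enorm (F xs - F (u k) - Mx) + enorm Mx.
      by have := enormD (F xs - F (u k) - Mx) Mx; rewrite subrK.
    have hM : enorm Mx <= B * enorm (xs - u k) := A2 (u k) (ub k) (xs - u k).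
    rewrite enormB in hM.
    have hBM : B * enorm (u k - xs) <= B * e by rewrite ler_wpM2l ?ltW.
    have hQN : Q <= N + enorm (F (u k) - v) by exact: tri.
    have N0 : 0 <= N := enorm_ge0 _.
    have Q0 : 0 <= Q := enorm_ge0 _.
    set X := enorm (F xs - F (u k) - Mx) in hN h3.
    set Mn := enorm Mx in hN hM.
    set rk' := enorm (F (u k) - v) in rk hQN.
    have hN2 : (1 - eta) * N <= B * e by lra.
    have hQ2 : (1 - eta) * Q <= (1 - eta) * (N + rk') by rewrite ler_wpM2l //; lra.
    have r0 : 0 <= rk' := enorm_ge0 _.
    have hr : (1 - eta) * rk' <= e by nra.
    lra.
  have Q0 : Q <= 0.
    have e1 : 0 < 1 - eta by lra.
    suff : (1 - eta) * Q <= 0 by rewrite pmulr_rle0.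
    apply/ler_addgt0Pr => e e0; rewrite add0r.
    have := hQ (e / (B + 1)) (divr_gt0 e0 (ltr_wpDl (ltW Bp) ltr01)).
    by rewrite [(B + 1) * _]mulrC divfK // gt_eqF // ltr_wpDl ?ltW.
  apply/subr0_eq/enorm_eq0; apply/le_anti; rewrite Q0 enorm_ge0 //.
exists xs; split; first exact: Dball.
split => // eps e0.
have m0 : 0 < Num.min eps wp by rewrite lt_min e0 wpp.
have [k0 [_ hk0]] := Hcl _ m0 0%N.
exists k0 => k kk.
have hmin : Num.min eps wp <= eps by rewrite ge_min lexx.
have hminw : Num.min eps wp <= wp by rewrite ge_min lexx orbT.
suff : enorm (u k - xs) <= enorm (u k0 - xs) by lra.
rewrite -(subnKC kk); elim: (k - k0)%N => [|j IH]; first by rewrite addn0.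
rewrite addnS; have IH2 := IH; apply: le_trans IH.
by apply: mono => //; lra.
Qed.
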